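(* Fix $x_1,\dots,x_V\in\mathcal X$ and a class $\mathcal G$ of functions $\mathcal X\to[\kappa]$. Let $\mathcal M$ be a set of $V\times\kappa$ matrices such that every $M\in\mathcal M$ satisfies $M_{t,k}\in[0,1]$ and $\sum_{k=1}^\kappa M_{t,k}\le1$ for all $t\in[V]$, $k\in[\kappa]$, and suppose $\mathcal M_{\mathcal G}\subseteq\mathcal M$, where $\mathcal M_{\mathcal G}=\{M_f:f\in\mathcal G\}$ with $(M_f)_{t,k}=\mathbf 1\{f(x_t)=k\}$. Then the relaxation $$\mathbf{Rel}(\mathcal G\mid y_{1:t})=\mathbb E_{\boldsymbol\epsilon_{t+1:V}}\Big[\sup_{M\in\mathcal M}\Big\{2\sum_{j=t+1}^V\sum_{k=1}^\kappa\boldsymbol\epsilon_{j,k}M_{j,k}+\sum_{i=1}^tM_{i,y_i}\Big\}\Big]-t$$ is admissible for prediction with respect to $\mathcal G$, where $\boldsymbol\epsilon_{t+1},\dots,\boldsymbol\epsilon_V\in\{-1,1\}^\kappa$ are vectors of independent Rademacher random variables and $\boldsymbol\epsilon_{j,k}$ is the $k$-th coordinate of $\boldsymbol\epsilon_j$. Moreover, the randomized strategy which at round $t$ draws $\boldsymbol\epsilon_{t+1:V}$ and predicts $\widehat y_t\sim\widehat q_t(\boldsymbol\epsilon_{t+1:V})$, where $$\widehat q_t(\boldsymbol\epsilon_{t+1:V})=\operatorname*{argmin}_{q\in\Delta([\kappa])}\ \sup_{y_t\in[\kappa]}\Big\{1-q[y_t]+\sup_{M\in\mathcal M}\Big\{2\sum_{j=t+1}^V\sum_{k=1}^\kappa\boldsymbol\epsilon_{j,k}M_{j,k}+\sum_{s=1}^tM_{s,y_s}\Big\}-t\Big\},$$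 satisfies, for every $t\in[V]$ and every $y_{1:t-1}$, $\max_{y_t\in[\kappa]}\{\mathbb E[\ell(\widehat y_t,y_t)]+\mathbf{Rel}(\mathcal G\mid y_{1:t})\}\le\mathbf{Rel}(\mathcal G\mid y_{1:t-1})$, the expectation being over $\boldsymbol\epsilon_{t+1:V}$ and $\widehat y_t$.
   Context: Notation: $[n]=\{1,\dots,n\}$, $a_{1:t}=(a_1,\dots,a_t)$, $\Delta(A)$ is the set of probability distributions on $A$, and for $q\in\Delta([\kappa])$, $q[y]$ is the probability of $y$. The loss is $\ell(\widehat y,y)=\mathbf 1\{\widehat y\ne y\}$, labels $y_t\in[\kappa]$. Admissibility: given fixed $x_{1:V}$ and a class $\mathcal G$ of functions $\mathcal X\to[\kappa]$, a collection of real functions $\mathbf{Rel}(\mathcal G\mid y_{1:t})$, $t=0,\dots,V$ (with $y_{1:0}=\emptyset$), is admissible if (i) for all $y_{1:V}$, $\mathbf{Rel}(\mathcal G\mid y_{1:V})\ge-\inf_{f\in\mathcal G}\sum_{t=1}^V\ell(f(x_t),y_t)$, and (ii) for all $t\in[V]$ and $y_{1:t-1}$, $\inf_{q\in\Delta([\kappa])}\sup_{y_t\in[\kappa]}\{\mathbb E_{\widehat y_t\sim q}\ell(\widehat y_t,y_t)+\mathbf{Rel}(\mathcal G\mid y_{1:t})\}\le \mathbf{Rel}(\mathcal G\mid y_{1:t-1})$. *)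

(* Defs.v *)
From HB Require Import structures.
From mathcomp Require Import all_boot all_order all_algebra.
From mathcomp Require Import all_classical all_reals.
Set Implicit Arguments. Unset Strict Implicit. Unset Printing Implicit Defensive.
Import Order.TTheory GRing.Theory Num.Theory.
Local Open Scope ring_scope.
Local Open Scope classical_set_scope.

Section Defs.
Variables (R : realType) (X : Type) (V kappa : nat).

Definition loss (yh y : 'I_kappa) : R := (yh != y)%:R.

Definition Delta : set ('I_kappa -> R) :=
  [set q | (forall k, 0 <= q k) /\ \sum_(k < kappa) q k = 1].

Definition exp_loss (q : 'I_kappa -> R) (y : 'I_kappa) : R :=
  \sum_(k < kappa) q k * loss k y.

(* a label sequence y_{1:V}; round s (1-based s = i+1) has label y i *)
Definition labels := 'I_V -> 'I_kappa.

Definition upd (y : labels) (t : 'I_V) (yt : 'I_kappa) : labels :=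
  fun i => if i == t then yt else y i.

Definition epsT := {ffun 'I_V * 'I_kappa -> bool}.
Definition sgn (b : bool) : R := if b then 1 else -1.

Definition Eeps (F : epsT -> R) : R :=
  (#|{: epsT}|%:R)^-1 * \sum_(e : epsT) F e.

Definition Mf (x : 'I_V -> X) (f : X -> 'I_kappa) : 'M[R]_(V, kappa) :=
  \matrix_(t, k) (f (x t) == k)%:R.

Definition good_Mset (Ms : set 'M[R]_(V, kappa)) : Prop :=
  forall M, Ms M ->
    (forall t k, 0 <= M t k <= 1) /\ (forall t, \sum_(k < kappa) M t k <= 1).

(* inner quantity, with t = number of revealed labels (labels y 0 .. y (t-1)):
   sup_{M} { 2 sum_{j = t+1..V} sum_k eps_{j,k} M_{j,k} + sum_{i=1..t} M_{i,y_i} }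
   (in 0-based indices: j >= t, i < t) *)
Definition Phi (Ms : set 'M[R]_(V, kappa)) (t : nat) (y : labels) (e : epsT) : R :=
  sup [set (2 * \sum_(j < V | (t <= j)%N) \sum_(k < kappa) sgn (e (j, k)) * M j k
            + \sum_(i < V | (i < t)%N) M i (y i)) | M in Ms].

Definition Rel (Ms : set 'M[R]_(V, kappa)) (t : nat) (y : labels) : R :=
  Eeps (Phi Ms t y) - t%:R.

(* admissibility of a relaxation Rel t y (Rel t y depends on y only through
   its first t entries for the relaxation considered here) *)
Definition admissible (x : 'I_V -> X) (G : set (X -> 'I_kappa))
    (Rl : nat -> labels -> R) : Prop :=
  (forall y : labels,
     Rl V y >= - inf [set \sum_(t < V) loss (f (x t)) (y t) | f in G]) /\
  (forall (t : 'I_V) (y : labels),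
     inf [set sup [set exp_loss q yt + Rl t.+1 (upd y t yt) | yt in [set: 'I_kappa]]
         | q in Delta]
       <= Rl t y).

Definition qobj (Ms : set 'M[R]_(V, kappa)) (t : 'I_V) (y : labels) (e : epsT)
    (q : 'I_kappa -> R) : R :=
  sup [set 1 - q yt + Phi Ms t.+1 (upd y t yt) e - (t.+1)%:R | yt in [set: 'I_kappa]].

Definition is_argmin_q (Ms : set 'M[R]_(V, kappa)) (t : 'I_V) (y : labels) (e : epsT)
    (q : 'I_kappa -> R) : Prop :=
  Delta q /\ forall q', Delta q' -> qobj Ms t y e q <= qobj Ms t y e q'.

End Defs.

(* Main.v *)
Require Import Defs.
From HB Require Import structures.
From mathcomp Require Import all_boot all_order all_algebra.
From mathcomp Require Import all_classical all_reals.
From mathcomp Require Import ring lra.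
Import Order.TTheory GRing.Theory Num.Theory.
Local Open Scope ring_scope.
Local Open Scope classical_set_scope.

Section Signs.
Variable R : realType.
Variable K : nat.
Definition sT := {ffun 'I_K -> bool}.
Definition tog (l : 'I_K) (s : sT) : sT := [ffun k => if k == l then ~~ s k else s k].
Lemma togK l : involutive (tog l).
Proof. move=> s; apply/ffunP=> k; rewrite !ffunE; case: eqP => // _; exact: negbK. Qed.
Lemma sum_tog l (F : sT -> R) : \sum_s F s = \sum_s F (tog l s).
Proof. exact: (reindex_inj (inv_inj (togK l))). Qed.
Lemma sgnN b : sgn R (~~ b) = - sgn R b.
Proof. by case: b; rewrite /sgn ?opprK. Qed.
Lemma sgn2 b : sgn R b * sgn R b = 1.
Proof. by case: b; rewrite /sgn ?mulrNN mulr1. Qed.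
Lemma sgn_le1 b : sgn R b <= 1.
Proof. by case: b; rewrite /sgn //; lra. Qed.
Lemma sgn_gen1 b : -1 <= sgn R b.
Proof. by case: b; rewrite /sgn //; lra. Qed.
Lemma sum_anti l (F : sT -> R) : (forall s, F (tog l s) = - F s) -> \sum_s F s = 0.
Proof.
move=> h; have E : \sum_s F s = - \sum_s F s.
  by rewrite {1}(sum_tog l) (eq_bigr _ (fun s _ => h s)) sumrN.
lra.
Qed.
Definition eps (b : 'I_K -> bool) l (s : sT) := sgn R (b l (+) s l).
Lemma F1 b l : \sum_s eps b l s = 0.
Proof. by apply: (sum_anti l) => s; rewrite /eps ffunE eqxx addbN sgnN. Qed.
Lemma F2 b y l : \sum_s eps b y s * eps b l s = (y == l)%:R * #|{: sT}|%:R.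
Proof.
case: (eqVneq y l) => [->|ne].
  by rewrite (eq_bigr (fun _ => 1)) ?sumr_const ?mul1r // => s _; rewrite sgn2.
rewrite mul0r; apply: (sum_anti y) => s; rewrite /eps !ffunE eqxx.
by rewrite eq_sym (negbTE ne) addbN sgnN mulNr.
Qed.
End Signs.
Section Core.
Variable R : realType.
Variable K : nat.
Local Notation sT := (@sT K).
Local Notation eps := (@eps R K).

Lemma sum_pred_eq (P : pred 'I_K) l : \sum_(z | P z) ((z == l)%:R : R) = (P l)%:R.
Proof.
rewrite big_mkcond /= (bigD1 l) //= eqxx big1 ?addr0; first by case: (P l).
by move=> z /negbTE ->; case: (P z).
Qed.

Lemma core (P : pred 'I_K) (b : 'I_K -> bool) (Cy : 'I_K -> R) (v : 'I_K -> 'I_K -> R)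
  (B : sT -> R) :
  0 < \sum_(y | P y) (1:R) -> (forall y l, 0 <= v y l) -> (forall y, \sum_l v y l <= 1) ->
  (forall y s, P y -> Cy y + 2 * \sum_l eps b l s * v y l <= B s) ->
  \sum_(y | P y) (Cy y + v y y) - 1
    <= (\sum_(y | P y) (1:R)) * ((#|{: sT}|%:R)^-1 * \sum_s B s).
Proof.
set m := \sum_(y | P y) (1:R).
move=> m0 v0 v1 hB.
set N : R := #|{: sT}|%:R.
have N0 : 0 < N by rewrite ltr0n; apply/card_gt0P; exists [ffun=> true].
have sumPc : forall c : R, \sum_(y | P y) c = c * m.
  by move=> c; rewrite /m mulr_sumr; apply: eq_bigr => *; rewrite mulr1.
pose u y s := 2 + eps b y s - m^-1 * \sum_(z | P z) eps b z s.
have u0 : forall y s, 0 <= u y s.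
  move=> y s; rewrite /u.
  have h1 := sgn_gen1 R (b y (+) s y).
  have : m^-1 * \sum_(z | P z) eps b z s <= 1.
    rewrite -(mulVf (lt0r_neq0 m0)); apply: ler_wpM2l; first by rewrite invr_ge0 ltW.
    by apply: ler_sum => z _; apply: sgn_le1.
  rewrite /eps; lra.
have usum : forall s, \sum_(y | P y) u y s = 2 * m.
  move=> s; rewrite /u sumrB big_split /= !sumPc.
  by rewrite mulrAC mulVf ?lt0r_neq0 // mul1r addrK.
pose X y s := Cy y + 2 * \sum_l eps b l s * v y l.
have stepA : forall s, \sum_(y | P y) u y s * X y s <= 2 * m * B s.
  move=> s; apply: (@le_trans _ _ (\sum_(y | P y) u y s * B s)).
    by apply: ler_sum => y Py; rewrite ler_wpM2l //; apply: hB.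
  by rewrite -mulr_suml usum.
have su : forall y, \sum_s u y s = 2 * N.
  move=> y; rewrite /u sumrB big_split /= F1 addr0 sumr_const /N mulr_natr.
  rewrite -mulr_sumr exchange_big /= big1 ?mulr0 ?subr0 //.
  by move=> z _; rewrite F1.
have sue : forall y l, \sum_s u y s * eps b l s
    = (y == l)%:R * N - m^-1 * ((P l)%:R * N).
  move=> y l; rewrite /u.
  under eq_bigr do rewrite mulrBl mulrDl -mulrA mulr_suml.
  rewrite sumrB big_split /= -mulr_sumr F1 mulr0 add0r F2.
  rewrite -mulr_sumr exchange_big /=.
  under eq_bigr do rewrite F2.
  by rewrite -mulr_suml sum_pred_eq.
have stepB : forall y, \sum_s u y s * X y s
    = 2 * N * Cy y + 2 * \sum_l v y l * ((y == l)%:R * N - m^-1 * ((P l)%:R * N)).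
  move=> y; rewrite /X.
  under eq_bigr do rewrite mulrDr mulrCA mulr_sumr.
  rewrite big_split /= -mulr_suml su -mulr_sumr exchange_big /=.
  congr (_ + 2 * _); apply: eq_bigr => l _.
  by rewrite -sue mulr_sumr; apply: eq_bigr => s _; ring.
have stepC : forall y, N * (v y y - m^-1)
    <= \sum_l v y l * ((y == l)%:R * N - m^-1 * ((P l)%:R * N)).
  move=> y.
  apply: (@le_trans _ _ (\sum_l (v y l * (y == l)%:R * N - m^-1 * N * v y l))); last first.
    apply: ler_sum => l _.
    have k0 : 0 <= m^-1 * N * v y l.
      by apply: mulr_ge0 => //; apply: mulr_ge0; [rewrite invr_ge0 ltW|apply: ltW].
    by case: (P l); rewrite /=; lra.
  rewrite sumrB -mulr_suml -mulr_sumr (bigD1 y) //= eqxx mulr1 big1 ?addr0; last first.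
    by move=> l /negbTE; rewrite eq_sym => ->; rewrite mulr0.
  have k1 : m^-1 * N * \sum_l v y l <= m^-1 * N * 1.
    apply: ler_wpM2l; last exact: v1.
    by apply: mulr_ge0; [rewrite invr_ge0 ltW|apply: ltW].
  rewrite mulrBr; lra.
have total : 2 * (N * (\sum_(y | P y) (Cy y + v y y) - 1)) <= 2 * (m * \sum_s B s).
  apply: (@le_trans _ _ (\sum_(y | P y) \sum_s u y s * X y s)).
    have mm : m^-1 * m = 1 by rewrite mulVf ?lt0r_neq0.
    apply: (@le_trans _ _ (\sum_(y | P y) (2 * N * Cy y + 2 * (N * (v y y - m^-1))))).
      rewrite [X in _ <= X](eq_bigr (fun y => 2 * N * (Cy y + v y y) - 2 * N * m^-1)); last first.
        by move=> y _; ring.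
      rewrite sumrB -mulr_sumr sumPc -mulrA mm mulr1.
      by rewrite le_eqVlt; apply/orP; left; apply/eqP; ring.
    apply: ler_sum => y _; rewrite stepB lerD2l ler_pM2l //; exact: stepC.
  rewrite exchange_big /= mulrA mulr_sumr; apply: ler_sum => s _.
  exact: stepA.
rewrite mulrCA ler_pdivlMl //.
by move: total; rewrite ler_pM2l.
Qed.
End Core.
Section Main.
Variables (R : realType) (V kappa : nat).
Local Notation eT := (epsT V kappa).
Local Notation sT := (@sT kappa).

Lemma cardE_gt0 : 0 < (#|{: eT}|%:R : R).
Proof. by rewrite ltr0n; apply/card_gt0P; exists [ffun=> true]. Qed.

Lemma EepsD (F G : eT -> R) : Eeps (fun e => F e + G e) = Eeps F + Eeps G.
Proof. by rewrite /Eeps big_split /= mulrDr. Qed.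

Lemma EepsC (c : R) : Eeps (fun _ : eT => c) = c.
Proof.
rewrite /Eeps sumr_const -[c *+ _]mulr_natr mulrCA mulVf ?mulr1 //.
exact: lt0r_neq0 cardE_gt0.
Qed.

Lemma EepsB (F : eT -> R) c : Eeps (fun e => F e - c) = Eeps F - c.
Proof. by rewrite EepsD EepsC. Qed.

Lemma Eeps_le (F G : eT -> R) : (forall e, F e <= G e) -> Eeps F <= Eeps G.
Proof.
move=> h; rewrite /Eeps; apply: ler_wpM2l; first by rewrite invr_ge0 ltW ?cardE_gt0.
by apply: ler_sum => e _; apply: h.
Qed.

Lemma Eeps_ge0 (F : eT -> R) : (forall e, 0 <= F e) -> 0 <= Eeps F.
Proof. by move=> h; rewrite -(EepsC 0); apply: Eeps_le. Qed.

Definition xr (t : 'I_V) (e : eT) (s : sT) : eT :=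
  [ffun jk => if jk.1 == t then e jk (+) s jk.2 else e jk].

Lemma xrK t s : involutive (xr t ^~ s).
Proof.
move=> e; apply/ffunP=> jk; rewrite !ffunE; case: eqP => // _; exact: addbK.
Qed.

Lemma Eeps_xr t (F : eT -> R) :
  Eeps F = Eeps (fun e => (#|{: sT}|%:R)^-1 * \sum_s F (xr t e s)).
Proof.
rewrite {2}/Eeps -mulr_sumr exchange_big /=.
rewrite (eq_bigr (fun _ => \sum_e F e)); last first.
  by move=> s _; rewrite (reindex_inj (inv_inj (xrK t s))) /= ; apply: eq_bigr => e _; rewrite xrK.
rewrite sumr_const -[(\sum_e F e) *+ _]mulr_natr /Eeps.
have ns : (#|{: sT}|%:R : R) != 0.
  by rewrite lt0r_neq0 // ltr0n; apply/card_gt0P; exists [ffun=> true].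
have ne := lt0r_neq0 (cardE_gt0).
move: ns ne; set a := (#|{: sT}|%:R : R); set b := (_ : R)^-1; move=> ns ne.
by rewrite [a^-1 * _]mulrCA mulVf // mulr1.
Qed.
End Main.
Section Main2.
Variables (R : realType) (V kappa : nat) (Ms : set 'M[R]_(V, kappa)).
Hypothesis gM : good_Mset Ms.
Hypothesis Msn : Ms !=set0.
Variables (t : 'I_V) (y : labels V kappa).
Local Notation eT := (epsT V kappa).
Local Notation sT := (@sT kappa).
Local Notation xr := (@xr V kappa).

Definition Cf (e : eT) (M : 'M[R]_(V, kappa)) : R :=
  2 * \sum_(j < V | (t < j)%N) \sum_(k < kappa) sgn R (e (j, k)) * M j k
  + \sum_(i < V | (i < t)%N) M i (y i).

Lemma E1 (e : eT) (M : 'M[R]_(V, kappa)) (yt : 'I_kappa) :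
  2 * \sum_(j < V | (t.+1 <= j)%N) \sum_(k < kappa) sgn R (e (j, k)) * M j k
    + \sum_(i < V | (i < t.+1)%N) M i (upd y t yt i) = Cf e M + M t yt.
Proof.
rewrite [X in _ + X = _](bigD1 t) ?ltnSn //= /upd eqxx.
rewrite [X in _ + (_ + X) = _](eq_bigr (fun i => M i (y i))); last by move=> i /andP[_ /negbTE ->].
rewrite [X in _ + (_ + X) = _](eq_bigl (fun i : 'I_V => (i < t)%N)); last by move=> i; rewrite ltnS ltn_neqAle andbC.
rewrite /Cf; lra.
Qed.

Lemma E2 (e : eT) (M : 'M[R]_(V, kappa)) :
  2 * \sum_(j < V | (t <= j)%N) \sum_(k < kappa) sgn R (e (j, k)) * M j k
    + \sum_(i < V | (i < t)%N) M i (y i)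
  = Cf e M + 2 * \sum_(k < kappa) sgn R (e (t, k)) * M t k.
Proof.
rewrite [X in 2 * X](bigD1 t) ?leqnn //=.
rewrite (eq_bigl (fun j : 'I_V => (t < j)%N)); last first.
  by move=> j; rewrite ltn_neqAle andbC eq_sym.
rewrite /Cf; lra.
Qed.

Lemma E3 (e : eT) (s : sT) (M : 'M[R]_(V, kappa)) : Cf (xr t e s) M = Cf e M.
Proof.
rewrite /Cf; congr (2 * _ + _); apply: eq_bigr => j hj; apply: eq_bigr => k _.
rewrite ffunE /=; suff -> : (j == t) = false by [].
by apply/negbTE; apply: contraTneq hj => ->; rewrite ltnn.
Qed.

Lemma xr_row (e : eT) (s : sT) (k : 'I_kappa) : xr t e s (t, k) = e (t, k) (+) s k.
Proof. by rewrite ffunE /= eqxx. Qed.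

Lemma sgnM_le b (x : R) : 0 <= x <= 1 -> sgn R b * x <= 1.
Proof. by case/andP; case: b; rewrite /sgn; lra. Qed.

Definition CB : R := 2 * \sum_(j < V | (t < j)%N) \sum_(k < kappa) 1 + \sum_(i < V | (i < t)%N) 1.

Lemma Cf_ub (e : eT) (M : 'M[R]_(V, kappa)) : Ms M -> Cf e M <= CB.
Proof.
move=> hM; have [h1 h2] := gM _ hM.
rewrite /Cf /CB; apply: lerD.
  rewrite ler_pM2l //; apply: ler_sum => j _; apply: ler_sum => k _; exact: sgnM_le.
by apply: ler_sum => i _; case/andP: (h1 i (y i)).
Qed.

Lemma Phi1 (e : eT) (yt : 'I_kappa) : Phi Ms t.+1 (upd y t yt) e = sup [set Cf e M + M t yt | M in Ms].
Proof. by rewrite /Phi; congr sup; apply: eq_imagel => M _; apply: E1. Qed.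

Lemma Phi0 (e : eT) : Phi Ms t y e
  = sup [set Cf e M + 2 * \sum_(k < kappa) sgn R (e (t, k)) * M t k | M in Ms].
Proof. by rewrite /Phi; congr sup; apply: eq_imagel => M _; apply: E2. Qed.

Lemma hs1 (e : eT) (yt : 'I_kappa) : has_sup [set Cf e M + M t yt | M in Ms].
Proof.
split; first by case: Msn => M hM; exists (Cf e M + M t yt); exists M.
exists (CB + 1) => z [M hM <-]; apply: lerD; first exact: Cf_ub.
by have [h1 _] := gM _ hM; case/andP: (h1 t yt).
Qed.

Lemma hs0 (e : eT) : has_sup
  [set Cf e M + 2 * \sum_(k < kappa) sgn R (e (t, k)) * M t k | M in Ms].
Proof.
split; first by case: Msn => M hM; eexists; exists M.
exists (CB + 2 * \sum_(k < kappa) 1) => z [M hM <-]; apply: lerD; first exact: Cf_ub.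
have [h1 _] := gM _ hM.
rewrite ler_pM2l //; apply: ler_sum => k _; exact: sgnM_le.
Qed.
Definition NS : R := #|{: sT}|%:R.
Definition aa (e : eT) (k : 'I_kappa) : R := Phi Ms t.+1 (upd y t k) e.
Definition cc (e : eT) : R := NS^-1 * \sum_s Phi Ms t y (xr t e s).

Lemma COND e : \sum_k (if cc e < aa e k then aa e k - cc e else 0) <= 1.
Proof.
case: (pickP (fun k => cc e < aa e k)) => [k0 Pk0 | noP]; last first.
  by rewrite big1 ?ler01 // => k _; rewrite noP.
set P := fun k => cc e < aa e k.
set m := \sum_(k | P k) (1:R).
have m0 : 0 < m.
  rewrite /m (bigD1 k0) //=; have : 0 <= \sum_(i | P i && (i != k0)) (1:R).
    by apply: sumr_ge0 => *; apply: ler01.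
  lra.
have sumPc : forall c : R, \sum_(k | P k) c = c * m.
  by move=> c; rewrite /m mulr_sumr; apply: eq_bigr => *; rewrite mulr1.
rewrite -big_mkcond /= sumrB sumPc.
apply/ler_addgt0Pr => d d0.
have dm0 : 0 < d / m by rewrite divr_gt0.
have ex : forall k, exists M, Ms M /\ aa e k - d / m < Cf e M + M t k.
  move=> k; have [z [M hM <-] hz] := sup_adherent dm0 (hs1 e k).
  by exists M; split => //; rewrite /aa Phi1.
have [Mk hMk] := choice ex.
have hc := @core R kappa P (fun l => e (t, l)) (fun k => Cf e (Mk k)) (fun k l => Mk k t l)
  (fun s => Phi Ms t y (xr t e s)) m0.
have v0 : forall k l, 0 <= Mk k t l.
  by move=> k l; have [h1 _] := gM _ (hMk k).1; case/andP: (h1 t l).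
have v1 : forall k, \sum_l Mk k t l <= 1.
  by move=> k; exact: ((gM _ (hMk k).1).2 t).
have hB : forall k s, P k -> Cf e (Mk k) + 2 * \sum_l eps R kappa (fun l => e (t,l)) l s * Mk k t l
    <= Phi Ms t y (xr t e s).
  move=> k s _; rewrite Phi0; apply: (sup_upper_bound (hs0 _)); exists (Mk k).
    exact: (hMk k).1.
  by rewrite E3; congr (_ + 2 * _); apply: eq_bigr => l _; rewrite xr_row.
have hc' : \sum_(k | P k) (Cf e (Mk k) + Mk k t k) - 1 <= m * cc e := hc v0 v1 hB.
have ha : \sum_(k | P k) aa e k <= \sum_(k | P k) (Cf e (Mk k) + Mk k t k) + d / m * m.
  rewrite -sumPc -big_split /=; apply: ler_sum => k _; have := (hMk k).2; lra.
have dd : d / m * m = d by rewrite divfK ?lt0r_neq0.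
lra.
Qed.
Definition rr (e : eT) : R := 1 - \sum_k (if cc e < aa e k then aa e k - cc e else 0).
Definition qs (e : eT) (k : 'I_kappa) : R :=
  (if cc e < aa e k then aa e k - cc e else 0) + rr e / kappa%:R.

Lemma qs_Delta e : (0 < kappa)%N -> Delta (qs e).
Proof.
move=> kp; have r0 : 0 <= rr e by rewrite /rr subr_ge0 COND.
have rk : 0 <= rr e / kappa%:R by rewrite divr_ge0 ?ler0n.
split.
  move=> k; rewrite /qs; case: ifP => h; first by rewrite addr_ge0 // subr_ge0 ltW.
  by rewrite add0r.
rewrite /qs big_split /= sumr_const card_ord -[_ *+ kappa]mulr_natr divfK; last by rewrite pnatr_eq0 -lt0n.
rewrite /rr; lra.
Qed.

Lemma pw e yt : (0 < kappa)%N -> 1 - qs e yt + aa e yt - (t.+1)%:R <= cc e - t%:R.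
Proof.
move=> kp; have r0 : 0 <= rr e by rewrite /rr subr_ge0 COND.
have rk : 0 <= rr e / kappa%:R by rewrite divr_ge0 ?ler0n.
rewrite -natr1 /qs; case: ifP => h; first lra.
move/negbT: h; rewrite -leNgt => h; lra.
Qed.
End Main2.
Section Gen.
Variables (R : realType) (K : nat).
Lemma exp_loss_Delta (q : 'I_K -> R) yt : Delta q -> exp_loss q yt = 1 - q yt.
Proof.
case=> _ hs; rewrite /exp_loss /loss (bigD1 yt) //= eqxx mulr0 add0r.
rewrite (eq_bigr q); last by move=> k ->; rewrite mulr1n mulr1.
by rewrite -hs [in RHS](bigD1 yt) //= addrAC subrr add0r.
Qed.

Lemma exp_loss_ge0 (q : 'I_K -> R) yt : Delta q -> 0 <= exp_loss q yt.
Proof. by case=> h _; apply: sumr_ge0 => k _; rewrite mulr_ge0 ?ler0n. Qed.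

Lemma fin_has_sup (f : 'I_K -> R) (k0 : 'I_K) : has_sup [set f k | k in [set: 'I_K]].
Proof.
split; first by exists (f k0); exists k0.
exists (\sum_k `|f k|) => z [k _ <-]; rewrite (bigD1 k) //=.
apply: (le_trans (ler_norm _)); rewrite lerDl; apply: sumr_ge0 => *; exact: normr_ge0.
Qed.
End Gen.

Section Gen2.
Variables (R : realType) (V kappa : nat).
Local Notation eT := (epsT V kappa).
Lemma EepsN (F : eT -> R) : Eeps (fun e => - F e) = - Eeps F.
Proof. by rewrite /Eeps sumrN mulrN. Qed.
Lemma Eeps_sum (F : 'I_kappa -> eT -> R) :
  \sum_k Eeps (F k) = Eeps (fun e => \sum_k F k e).
Proof. by rewrite /Eeps -mulr_sumr exchange_big. Qed.

Lemma hsPhi (Ms : set 'M[R]_(V, kappa)) (t : nat) (y : labels V kappa) (e : eT) :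
  good_Mset Ms -> Ms !=set0 ->
  has_sup [set (2 * \sum_(j < V | (t <= j)%N) \sum_(k < kappa) sgn R (e (j, k)) * M j k
            + \sum_(i < V | (i < t)%N) M i (y i)) | M in Ms].
Proof.
move=> gM Msn; split; first by case: Msn => M hM; eexists; exists M.
exists (2 * \sum_(j < V | (t <= j)%N) \sum_(k < kappa) 1 + \sum_(i < V | (i < t)%N) 1).
move=> z [M hM <-]; have [h1 _] := gM _ hM; apply: lerD.
  rewrite ler_pM2l //; apply: ler_sum => j _; apply: ler_sum => k _; exact: sgnM_le.
by apply: ler_sum => i _; case/andP: (h1 i (y i)).
Qed.
End Gen2.
Theorem lemma2 (R : realType) (X : Type) (V kappa : nat)
    (x : 'I_V -> X) (G : set (X -> 'I_kappa)) (Ms : set 'M[R]_(V, kappa)) :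
  G !=set0 ->
  good_Mset Ms ->
  (forall f, G f -> Ms (Mf R x f)) ->
  admissible x G (Rel Ms) /\
  (forall (t : 'I_V) (y : labels V kappa) (qhat : epsT V kappa -> 'I_kappa -> R),
     (forall e, is_argmin_q Ms t y e (qhat e)) ->
     sup [set Eeps (fun e => exp_loss (qhat e) yt) + Rel Ms t.+1 (upd y t yt)
         | yt in [set: 'I_kappa]]
       <= Rel Ms t y).
Proof.
move=> [f0 Gf0] gM hG.
have Msn : Ms !=set0 by exists (Mf R x f0); apply: hG.
have RelE : forall (t : 'I_V) (y : labels V kappa),
    Rel Ms t y = Eeps (fun e => cc R V kappa Ms t y e - t%:R).
  move=> t y; rewrite EepsB /Rel; congr (_ - _); exact: Eeps_xr.
split; first split.
- move=> y; rewrite /Rel.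
  set S := [set _ | f in G].
  have hn : S !=set0 by eexists; exists f0.
  suff h : V%:R - Eeps (Phi Ms V y) <= inf S by lra.
  apply: lb_le_inf hn _ => z [f Gf <-].
  have h1 : forall e, \sum_i (Mf R x f) i (y i) <= Phi Ms V y e.
    move=> e; rewrite /Phi; apply: (sup_upper_bound (hsPhi R V kappa Ms V y e gM Msn)); exists (Mf R x f).
      exact: hG.
    rewrite big_pred0 ?mulr0 ?add0r; last by move=> j; rewrite leqNgt ltn_ord.
    by apply: eq_bigl => i; rewrite ltn_ord.
  have h2 := Eeps_le R V kappa _ _ h1; rewrite EepsC in h2.
  have h3 : \sum_i (Mf R x f) i (y i) + \sum_(t < V) loss R (f (x t)) (y t) = V%:R.
    rewrite -big_split /= (eq_bigr (fun _ => 1)) ?sumr_const ?card_ord //.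
    by move=> i _; rewrite /Mf mxE /loss; case: (f (x i) == y i); rewrite /= ?mulr1n ?mulr0n ?addr0 ?add0r.
  lra.
- move=> t y.
  have kp : (0 < kappa)%N by apply: (leq_ltn_trans _ (ltn_ord (y t))).
  pose qa := fun k => Eeps (fun e => qs R V kappa Ms t y e k).
  have Dqa : Delta qa.
    split; first by move=> k; apply: Eeps_ge0 => e; case: (qs_Delta R V kappa Ms gM Msn t y e kp) => h _.
    rewrite /qa (Eeps_sum R V kappa (fun k e => qs R V kappa Ms t y e k)).
    transitivity (Eeps (fun _ : epsT V kappa => (1:R))); last exact: EepsC.
    by congr Eeps; apply: funext => e; case: (qs_Delta R V kappa Ms gM Msn t y e kp).
  set E := (X in inf X <= _).
  have hl : has_lbound E.
    exists (Rel Ms t.+1 (upd y t (y t))) => z [q Dq <-].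
    apply: (@le_trans _ _ (exp_loss q (y t) + Rel Ms t.+1 (upd y t (y t)))).
      by rewrite lerDr exp_loss_ge0.
    apply: (sup_upper_bound (fin_has_sup R kappa
      (fun yt => exp_loss q yt + Rel Ms t.+1 (upd y t yt)) (y t))).
    by exists (y t).
  apply: (le_trans (ge_inf hl _)); first by exists qa.
  apply: ge_sup; first by eexists; exists (y t).
  move=> z [yt _ <-].
  rewrite exp_loss_Delta // RelE /Rel.
  have e1 : 1 - qa yt + (Eeps (Phi Ms t.+1 (upd y t yt)) - (t.+1)%:R)
     = Eeps (fun e => 1 - qs R V kappa Ms t y e yt + aa R V kappa Ms t y e yt - (t.+1)%:R).
    by rewrite EepsB EepsD EepsD EepsC EepsN /aa /qa addrA.
  rewrite e1; apply: Eeps_le => e; exact: pw.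
- move=> t y qhat hq.
  have kp : (0 < kappa)%N by apply: (leq_ltn_trans _ (ltn_ord (y t))).
  apply: ge_sup; first by eexists; exists (y t).
  move=> z [yt _ <-].
  rewrite RelE /Rel.
  have e1 : Eeps (fun e => exp_loss (qhat e) yt) + (Eeps (Phi Ms t.+1 (upd y t yt)) - (t.+1)%:R)
     = Eeps (fun e => exp_loss (qhat e) yt + aa R V kappa Ms t y e yt - (t.+1)%:R).
    by rewrite EepsB EepsD /aa addrA.
  rewrite e1; apply: Eeps_le => e.
  have Dh := (hq e).1.
  apply: (@le_trans _ _ (qobj Ms t y e (qhat e))).
    rewrite exp_loss_Delta //.
    by apply: (sup_upper_bound (fin_has_sup R kappa _ (y t))); exists yt.
  apply: (le_trans ((hq e).2 _ (qs_Delta R V kappa Ms gM Msn t y e kp))).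
  apply: ge_sup; first by eexists; exists (y t).
  move=> w [k _ <-]; exact: pw.
Qed.
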